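(* Let $k\ge2$ be an integer and let $D$ be a digraph of order $n$ with no isolated vertex. Then $\gamma_{trk}(D)=k$ if and only if one of the following holds: (a) $n=k$; (b) $n\ge k+1$ and there exists a set $X=\{v_1,\dots,v_t\}\subseteq V(D)$ with $2\le t\le k$ such that the induced subdigraph $D[X]$ has no isolated vertex and $V(D)\setminus X\subseteq N^+(v_i)$ for every $1\le i\le t$.
   Context: All digraphs are finite, with no loops or multiple arcs (pairs of opposite arcs are allowed). $N^-(v)$, $N^+(v)$ denote the in- and out-neighborhoods of $v$; $D[X]$ is the subdigraph induced by $X$. A vertex is isolated if it has no in-neighbor and no out-neighbor. For a positive integer $k$, a $k$-rainbow dominating function ($k$RDF) on $D$ is a function $f:V(D)\to\mathcal P(\{1,\dots,k\})$ such that every $v$ with $f(v)=\emptyset$ satisfies $\bigcup_{u\in N^-(v)}f(u)=\{1,\dots,k\}$; its weight is $\omega(f)=\sum_v|f(v)|$. If $D$ has no isolated vertex, a total $k$RDF (T$k$RDF) is a $k$RDF $f$ such that the subdigraph induced by $\{v:f(v)\ne\emptyset\}$ has no isolated vertex; $\gamma_{trk}(D)$ is the minimum weight of a T$k$RDF. *)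

(* Defs.v *)
(* A digraph on a finite vertex type T is an arc relation
   a : rel T (a u v = arc u -> v); looplessness is a hypothesis (irreflexive a).
   Colours {1,..,k} are represented by 'I_k. *)
From mathcomp Require Import all_boot.
Set Implicit Arguments. Unset Strict Implicit. Unset Printing Implicit Defensive.

Section Digraph.
Variables (T : finType) (a : rel T).

Definition in_nbhd (v : T) : {set T} := [set u | a u v].
Definition out_nbhd (v : T) : {set T} := [set w | a v w].

Definition nonisolated_in (S : {set T}) (v : T) : bool :=
  [exists u in S, a u v || a v u].

Definition no_isolated : bool := [forall v, nonisolated_in [set: T] v].

Definition induced_no_isolated (S : {set T}) : bool :=
  [forall v in S, nonisolated_in S v].

Variable k : nat.

Definition is_kRDF (f : {ffun T -> {set 'I_k}}) : bool :=
  [forall v, (f v == set0) ==> (\bigcup_(u in in_nbhd v) f u == [set: 'I_k])].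

Definition support (f : {ffun T -> {set 'I_k}}) : {set T} :=
  [set v | f v != set0].

Definition is_TkRDF (f : {ffun T -> {set 'I_k}}) : bool :=
  is_kRDF f && induced_no_isolated (support f).

Definition weight (f : {ffun T -> {set 'I_k}}) : nat := \sum_v #|f v|.

(* minimum weight of a TkRDF; the default #|T| * k is the weight of the
   constant-full function, which is a TkRDF whenever D has no isolated
   vertex, so this is the true minimum under the standing assumption *)
Definition gamma_trk : nat :=
  \big[minn/(#|T| * k)%N]_(f : {ffun T -> {set 'I_k}} | is_TkRDF f) weight f.

End Digraph.

(* Main.v *)
Require Import Defs.
From mathcomp Require Import all_boot.
Set Implicit Arguments. Unset Strict Implicit. Unset Printing Implicit Defensive.

Section Helpers.
Variables (T : finType) (a : rel T) (k : nat).

Lemma card_bigcup_le (P : pred T) (F : T -> {set 'I_k}) :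
  #|\bigcup_(i | P i) F i| <= \sum_(i | P i) #|F i|.
Proof.
elim/big_ind2: _ => [|m A n B hA hB|i _] //; first by rewrite cards0.
apply: leq_trans (leq_card_setU A B).1 _; exact: leq_add.
Qed.

Lemma cover_le (f : {ffun T -> {set 'I_k}}) w :
  is_kRDF a f -> f w = set0 -> k <= \sum_(u | u \in in_nbhd a w) #|f u|.
Proof.
move=> /forallP /(_ w) h hw; move: h; rewrite hw eqxx /= => /eqP hU.
have := card_bigcup_le (fun u => u \in in_nbhd a w) f.
by rewrite hU cardsT card_ord.
Qed.

Lemma kRDF_ge (f : {ffun T -> {set 'I_k}}) : is_kRDF a f -> minn #|T| k <= weight f.
Proof.
move=> hf; case: (boolP [exists v, f v == set0]) => [/existsP [v /eqP hv]|].
  rewrite geq_min; apply/orP; right.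
  apply: leq_trans (cover_le hf hv) _.
  rewrite /weight [X in _ <= X](bigID (fun u => u \in in_nbhd a v)) /=.
  exact: leq_addr.
rewrite negb_exists => /forallP h; rewrite geq_min; apply/orP; left.
rewrite /weight -sum1_card; apply: leq_sum => v _.
by rewrite card_gt0; exact: h v.
Qed.

Lemma gamma_ge : 0 < k -> minn #|T| k <= gamma_trk a k.
Proof.
move=> k0; rewrite /gamma_trk.
elim/big_ind: _ => [|x y hx hy|f hf].
- apply: leq_trans (geq_minl _ _) _; exact: leq_pmulr.
- by rewrite leq_min hx hy.
- exact: kRDF_ge (andP hf).1.
Qed.

Lemma bigmin_le (I : eqType) (r : seq I) (P : pred I) (F : I -> nat) d x :
  x \in r -> P x -> \big[minn/d]_(i <- r | P i) F i <= F x.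
Proof.
elim: r => // y r IH; rewrite inE big_cons => /orP [/eqP<-|xr] Px.
  by rewrite Px geq_minl.
case: (P y); last exact: IH.
by rewrite (leq_trans (geq_minr _ _)) // IH.
Qed.

Lemma gamma_le (f : {ffun T -> {set 'I_k}}) : is_TkRDF a f -> gamma_trk a k <= weight f.
Proof. by move=> hf; apply: bigmin_le => //; rewrite mem_index_enum. Qed.

Lemma gamma_attained :
  gamma_trk a k = (#|T| * k)%N \/
  exists f : {ffun T -> {set 'I_k}}, is_TkRDF a f /\ weight f = gamma_trk a k.
Proof.
rewrite /gamma_trk.
apply: (@big_ind nat (fun x => x = (#|T| * k)%N \/
                   exists f : {ffun T -> {set 'I_k}}, is_TkRDF a f /\ weight f = x)).
- by left.
- move=> x y hx hy /=; case: (leqP x y) => h.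
    by [].
  by [].
- move=> f hf; right; by exists f.
Qed.

Lemma supp_le (f : {ffun T -> {set 'I_k}}) : #|Defs.support f| <= weight f.
Proof.
rewrite /weight -sum1_card [X in _ <= X](bigID (fun v => v \in Defs.support f)) /=.
apply: leq_trans (leq_addr _ _); apply: leq_sum => v; rewrite inE => hv.
by rewrite card_gt0.
Qed.

End Helpers.

Theorem theorem3p5 (T : finType) (a : rel T) (k : nat) :
  2 <= k -> irreflexive a -> no_isolated a ->
  (gamma_trk a k = k <->
   (#|T| = k \/
    (k.+1 <= #|T| /\
     exists X : {set T},
       [/\ 2 <= #|X| <= k, induced_no_isolated a X &
           forall v, v \in X -> ~: X \subset out_nbhd a v]))).
Proof.
move=> k2 irr hno.
have k0 : 0 < k by apply: leq_trans k2.
set f0 : {ffun T -> {set 'I_k}} := [ffun _ => [set Ordinal k0]].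
have f0T : is_TkRDF a f0.
  apply/andP; split.
    apply/forallP => v; apply/implyP; rewrite ffunE => /eqP /setP /(_ (Ordinal k0)).
    by rewrite !inE eqxx.
  have -> : Defs.support f0 = setT.
    apply/setP => v; rewrite !inE ffunE; apply/negP => /eqP /setP /(_ (Ordinal k0)).
    by rewrite !inE eqxx.
  apply/forallP => v; apply/implyP => _; exact: (forallP hno v).
have wf0 : weight f0 = #|T|.
  rewrite /weight -sum1_card; apply: eq_bigr => v _; by rewrite ffunE cards1.
have gup : gamma_trk a k <= #|T| by rewrite -wf0 gamma_le.
have glo := gamma_ge a k0.
split.
- move=> hg.
  have [hn|hn] : #|T| = k \/ k < #|T|.
    by move: gup; rewrite hg leq_eqVlt => /orP [/eqP ->|->]; [left|right].
    by left.
  right; split => //.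
  case: (gamma_attained a k) => [hd|[f [hf wf]]].
    move: gup; rewrite hd => h2.
    have h3 : #|T| * 2 <= #|T| * k by rewrite leq_mul2l k2 orbT.
    have h4 := leq_trans h3 h2.
    move: h4; rewrite muln2 -addnn -{3}(addn0 #|T|) leq_add2l leqn0 => /eqP h5.
    by move: hn; rewrite h5.
  rewrite hg in wf.
  have [w hw] : exists w, w \notin Defs.support f.
    apply/existsP; rewrite -negb_forall; apply/negP => /forallP hall.
    have : #|Defs.support f| = #|T|.
      by rewrite -cardsT; apply: eq_card => v; rewrite hall inE.
    move=> hc; move: (supp_le f); rewrite hc wf => h6; move: (leq_ltn_trans h6 hn).
    by rewrite ltnn.
  have hw0 : f w = set0 by move: hw; rewrite inE negbK => /eqP.
  have key : forall w u, f w = set0 -> u \in Defs.support f -> a u w.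
    move=> {hw hw0} w u hw0 hu.
    have hc := cover_le (andP hf).1 hw0.


    have hs : \sum_(u | ~~ (u \in in_nbhd a w)) #|f u| == 0.
      move: hc; rewrite -{1}wf /weight (bigID (fun u => u \in in_nbhd a w)) /=.
      by rewrite -{2}(addn0 (\sum_(i | _) _)) leq_add2l leqn0.
    move: hs; rewrite sum_nat_eq0 => /forallP /(_ u).
    case: (boolP (u \in in_nbhd a w)) => [|_ /=]; first by rewrite inE.
    by rewrite cards_eq0; move: hu; rewrite inE => /negbTE ->.
  exists (Defs.support f); split.
  + apply/andP; split; last by have := supp_le f; rewrite wf.
    move/forallP: (andP hf).1 => /(_ w); rewrite hw0 eqxx /= => /eqP hU.
    have : Ordinal k0 \in \bigcup_(u in in_nbhd a w) f u by rewrite hU inE.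
    case/bigcupP => u _ hiu.
    have hu : u \in Defs.support f by rewrite inE; apply/set0Pn; exists (Ordinal k0).
    move/forallP: (andP hf).2 => /(_ u); rewrite hu /= => /existsP [u' /andP [hu' hauu']].
    apply/card_gt1P; exists u, u'; split => //.
    apply/negP => /eqP equ; move: hauu'; by rewrite -equ irr.
  + exact: (andP hf).2.
  + move=> v hv; apply/subsetP => x; rewrite !inE negbK => /eqP hx.
    apply: key => //; exact/eqP.
- case=> [hn|[hn [X [/andP [hX2 hXk] hXi hXs]]]].
    apply/eqP; rewrite eqn_leq; apply/andP; split; first by rewrite -{2}hn.
    by move: glo; rewrite hn minnn.
  have [x0 hx0] : exists x0, x0 \in X.
    by apply/card_gt0P; apply: leq_trans hX2.
  set g := fun i : 'I_k => nth x0 (enum X) i.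
  have gX : forall i, g i \in X.
    move=> i; rewrite /g; case: (ltnP i (size (enum X))) => hi.
      by rewrite -mem_enum mem_nth.
    by rewrite nth_default.
  set fX : {ffun T -> {set 'I_k}} := [ffun v => [set i | g i == v]].
  have supX : Defs.support fX = X.
    apply/setP => v; rewrite inE ffunE; apply/set0Pn/idP.
      by case=> i; rewrite inE => /eqP <-.
    move=> hv.
    have hi : index v (enum X) < k.
      apply: leq_trans hXk; by rewrite cardE index_mem mem_enum.
    exists (Ordinal hi); rewrite inE /g /= nth_index //; by rewrite mem_enum.
  have fXT : is_TkRDF a fX.
    apply/andP; split; last by rewrite supX.
    apply/forallP => v; apply/implyP => hv.
    have vX : v \notin X by rewrite -supX inE hv.
    apply/eqP/setP => i; rewrite inE; apply/bigcupP; exists (g i).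
      rewrite inE.
      have := subsetP (hXs _ (gX i)) v; rewrite !inE; apply; exact: vX.
    by rewrite ffunE inE.
  have wfX : weight fX = k.
    rewrite /weight.
    have -> : \sum_v #|fX v| = \sum_v \sum_(i | g i == v) 1.
      by apply: eq_bigr => v _; rewrite ffunE sum1dep_card.
    transitivity (\sum_(i : 'I_k) 1); last by rewrite sum1_card card_ord.
    symmetry; rewrite (partition_big g predT) //=.
  apply/eqP; rewrite eqn_leq; apply/andP; split; first by have := gamma_le fXT; rewrite wfX.
  by move: glo; rewrite (minn_idPr (ltnW hn)).
Qed.
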